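(* Let $p$ be a prime. The matrix $(L(n,k,0,p))_{n,k\ge0}$ has the properties that for each $k\ge0$ there is $i\in\{0,\dots,p-1\}$ with $L(n,k,0,p)=e(n,k,i,p)$ for all $n\ge0$, and $L(n,n,0,p)=1$ for all $n\ge 0$; moreover it is the unique matrix $(a(n,k))_{n,k\ge0}$ with these two properties (each column equal to $(e(n,k,i,p))_{n\ge0}$ for some $i$, and all main-diagonal entries equal to $1$).
   Context: $e(n,k,j,p)$ is the number of $k$-element subsets of $\{1,\dots,n\}$ whose sum of elements is congruent to $j$ modulo $p$ (the empty set has sum $0$). $\begin{bmatrix} n\\ k\end{bmatrix}_q$ is the Gaussian binomial coefficient (a polynomial in $q$, zero for $k>n$). The $p$-Losanitsch numbers $L(n,k,j,p)$, $0\le j\le p-1$, are defined by $\sum_{j=0}^{p-1}L(n,k,j,p)q^j\equiv\begin{bmatrix} n\\ k\end{bmatrix}_q\pmod{q^p-1}$, i.e. $L(n,k,j,p)$ is the sum of the coefficients of $q^m$ in $\begin{bmatrix} n\\ k\end{bmatrix}_q$ over all $m\equiv j\pmod p$. *)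

(* Defs.v *)
From mathcomp Require Import all_boot all_order all_algebra.
Set Implicit Arguments. Unset Strict Implicit. Unset Printing Implicit Defensive.
Import GRing.Theory.
Local Open Scope ring_scope.

(* e(n,k,j,p): number of k-element subsets of {1,...,n} whose element sum
   is congruent to j mod p.  {1,...,n} is represented by 'I_n via i |-> i+1. *)
Definition e_cnt (n k j p : nat) : nat :=
  #|[set A : {set 'I_n} | (#|A| == k) &&
      ((\sum_(i in A) (i.+1 : nat)) %% p == j %% p)%N]|.

Fixpoint gauss_binom (n k : nat) : {poly int} :=
  match n, k with
  | _, 0 => 1
  | 0, _.+1 => 0
  | n'.+1, k'.+1 => gauss_binom n' k' + 'X^(k'.+1) * gauss_binom n' k'.+1
  end.

Definition Los (n k j p : nat) : int :=
  \sum_(m < size (gauss_binom n k) | (m %% p == j %% p)%N) (gauss_binom n k)`_m.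

(* Main.v *)
Require Import Defs.
From mathcomp Require Import all_boot all_order all_algebra.
Set Implicit Arguments. Unset Strict Implicit. Unset Printing Implicit Defensive.
Import GRing.Theory.
Local Open Scope ring_scope.

Definition ssum n (A : {set 'I_n}) : nat := (\sum_(i in A) (i : nat).+1)%N.

Definition G n k : {poly int} :=
  \sum_(A : {set 'I_n} | #|A| == k) 'X^(ssum A).

Fixpoint tri k := if k is k'.+1 then (tri k' + k'.+1)%N else 0%N.

Lemma G_n0 n : G n 0 = 1.
Proof.
rewrite /G (big_pred1 set0); first by rewrite /ssum big_set0 expr0.
by move=> A; rewrite /= cards_eq0.
Qed.

Lemma G_0S k : G 0 k.+1 = 0.
Proof.
rewrite /G big_pred0 // => A; apply/negbTE; rewrite neq_ltn; apply/orP; left.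
by apply: leq_ltn_trans (max_card _) _; rewrite card_ord.
Qed.

Definition hl n (B : {set 'I_n}) : {set 'I_n.+1} := [set lift ord0 x | x in B].
Definition hl' n (A : {set 'I_n.+1}) : {set 'I_n} := [set j | lift ord0 j \in A].

Lemma ssum_hl n (B : {set 'I_n}) : ssum (hl B) = (ssum B + #|B|)%N.
Proof.
rewrite /ssum /hl big_imset /=; last by move=> x y _ _; apply: lift_inj.
rewrite -sum1_card -big_split /=; apply: eq_bigr => i _.
rewrite /= /bump /= add1n addn1; done.
Qed.

Lemma card_hl n (B : {set 'I_n}) : #|hl B| = #|B|.
Proof. by rewrite card_imset //; apply: lift_inj. Qed.

Lemma ord0_hl n (B : {set 'I_n}) : (ord0 \in hl B) = false.
Proof.
apply/negbTE/imsetP => -[j _ hj]; by move: (neq_lift (@ord0 n) j); rewrite -hj eqxx.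
Qed.

Lemma hl'K n (B : {set 'I_n}) : hl' (hl B) = B.
Proof. by apply/setP => j; rewrite inE mem_imset //; apply: lift_inj. Qed.

Lemma hl'K1 n (B : {set 'I_n}) : hl' (ord0 |: hl B) = B.
Proof.
apply/setP => j; rewrite !inE mem_imset; last by apply: lift_inj.
by rewrite eq_sym (negbTE (neq_lift _ _)).
Qed.

Lemma G_SS n k : G n.+1 k.+1 = 'X^(k.+1) * (G n k + G n k.+1).
Proof.
rewrite /G (bigID (fun A : {set 'I_n.+1} => ord0 \in A)) /= mulrDr; congr (_ + _).
- rewrite (reindex_onto (fun B => ord0 |: hl B) (@hl' n)) /=; last first.
    move=> A /andP [_ h0]; apply/setP => x; rewrite !inE.
    case: (unliftP ord0 x) => [j ->|->]; last by rewrite eqxx h0.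
    by rewrite eq_sym (negbTE (neq_lift _ _)) mem_imset ?inE //; apply: lift_inj.
  rewrite mulr_sumr; apply: eq_big => B.
    by rewrite hl'K1 eqxx setU11 cardsU1 ord0_hl card_hl andbT andbT.
  move=> /andP [/andP [/eqP hc _] _].
  have {}hc : #|B| = k by move: hc; rewrite cardsU1 ord0_hl card_hl /= add1n => -[].
  rewrite /ssum big_setU1 ?ord0_hl //= -/(ssum _) ssum_hl hc -exprD.
  by rewrite /ssum add1n addSn addnC.
- rewrite (reindex_onto (@hl n) (@hl' n)) /=; last first.
    move=> A /andP [_ h0]; apply/setP => x.
    case: (unliftP ord0 x) => [j ->|->]; last by rewrite ord0_hl (negbTE h0).
    by rewrite mem_imset ?inE //; apply: lift_inj.
  rewrite mulr_sumr; apply: eq_big => B.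
    by rewrite hl'K eqxx ord0_hl card_hl andbT andbT.
  move=> /andP [/andP [/eqP hc _] _].
  by rewrite card_hl in hc; rewrite ssum_hl hc -exprD addnC.
Qed.

Lemma GQ n k : G n k = 'X^(tri k) * gauss_binom n k.
Proof.
elim: n k => [|n IH] [|k] /=.
- by rewrite G_n0 mulr1.
- by rewrite G_0S mulr0.
- by rewrite G_n0 mulr1.
- rewrite G_SS !IH /= !mulrDr !mulrA -!exprD.
  by rewrite (addnC k.+1 (tri k)) (addnC k.+1 (_ + _)).
Qed.

Lemma sum_coefXn M (c : pred nat) t : (t < M)%N ->
  \sum_(s < M | c s) ('X^t : {poly int})`_s = (c t)%:R.
Proof.
move=> ht; rewrite big_mkcond (bigD1 (Ordinal ht)) //= big1 ?addr0.
  by rewrite coefXn eqxx; case: (c t).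
move=> s hs; rewrite coefXn; case: (c s) => //.
suff -> : (s == t :> nat) = false by [].
by apply/negbTE; apply: contra hs => /eqP h; apply/eqP/val_inj.
Qed.

Lemma ssum_le n (A : {set 'I_n}) : (ssum A <= n * n)%N.
Proof.
apply: (@leq_trans (\sum_(i in A) n)%N).
  by apply: leq_sum => i _; apply: ltn_ord.
rewrite sum_nat_const leq_mul2r; apply/orP; right.
by apply: leq_trans (max_card _) _; rewrite card_ord.
Qed.

Lemma stepB p n k i M : (n * n < M)%N ->
  \sum_(s < M | (s %% p == i %% p)%N) (G n k)`_s = (e_cnt n k i p)%:Z.
Proof.
move=> hM; rewrite /G.
under eq_bigr do rewrite coef_sum.
rewrite exchange_big /=.
under eq_bigr => A _ do rewrite (sum_coefXn (fun s => s %% p == i %% p)%N) ?(leq_ltn_trans (ssum_le A) hM) //.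
rewrite /e_cnt -natz -sum1_card natr_sum big_mkcond [RHS]big_mkcond.
apply: eq_bigr => A _; rewrite inE /=.
by case: (#|A| == k); case: (_ == _).
Qed.

Lemma stepA p n k N : (size (gauss_binom n k) <= N)%N ->
  \sum_(s < tri k + N | (s %% p == tri k %% p)%N) (G n k)`_s = Los n k 0 p.
Proof.
move=> hN; rewrite GQ big_split_ord /= big1 ?add0r; last first.
  by move=> i _; rewrite coefXnM /= ltn_ord.
rewrite /Los (@big_ord_widen_cond _ _ _ _ _ (fun m => m %% p == 0 %% p)%N (fun m => (gauss_binom n k)`_m) hN) big_mkcond [RHS]big_mkcond /=.
apply: eq_bigr => i _; rewrite coefXnM /= ltnNge leq_addr /= addKn.
rewrite -{2}[tri k]addn0 eqn_modDl.
case: (_ == _) => //=; case: ltnP => // hi.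
by rewrite nth_default.
Qed.

Lemma Los_e p n k : Los n k 0 p = (e_cnt n k (tri k %% p) p)%:Z.
Proof.
rewrite -(@stepA p n k (size (gauss_binom n k) + n * n).+1); last by rewrite -addnS leq_addr.
rewrite (@stepB p n k (tri k)); last first.
  by rewrite addnS ltnS addnA leq_addl.
by rewrite /e_cnt modn_mod.
Qed.

Lemma gb_gt n k : (n < k)%N -> gauss_binom n k = 0.
Proof.
elim: n k => [|n IH] [|k] //= hk.
by rewrite !IH ?mulr0 ?addr0 // ltnW.
Qed.

Lemma gb_nn n : gauss_binom n n = 1.
Proof. by elim: n => //= n IH; rewrite IH gb_gt ?mulr0 ?addr0. Qed.

Lemma Los_nn p n : Los n n 0 p = 1.
Proof.
rewrite /Los gb_nn size_poly1 big_mkcond big_ord1 /= mod0n eqxx.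
by rewrite coef1.
Qed.

Lemma e_diag p k i : (e_cnt k k i p)%:Z = (tri k %% p == i %% p)%N%:R.
Proof.
rewrite -(@stepB p k k i (k * k + tri k).+1) ?ltnS ?leq_addr //.
by rewrite GQ gb_nn mulr1 (sum_coefXn (fun s => s %% p == i %% p)%N) // ltnS leq_addl.
Qed.

Unset Implicit Arguments.
Theorem proposition5p2 (p : nat) (hp : prime p) :
  [/\ (forall k : nat, exists2 i : nat, (i < p)%N &
          forall n : nat, Los n k 0 p = (e_cnt n k i p)%:Z),
      (forall n : nat, Los n n 0 p = 1) &
      (forall a : nat -> nat -> int,
         (forall k : nat, exists2 i : nat, (i < p)%N &
            forall n : nat, a n k = (e_cnt n k i p)%:Z) ->
         (forall n : nat, a n n = 1) ->
         forall n k : nat, a n k = Los n k 0 p)].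
Proof.
split.
- move=> k; exists (tri k %% p)%N; first by rewrite ltn_pmod // prime_gt0.
  by move=> n; apply: Los_e.
- by move=> n; apply: Los_nn.
- move=> a ha hd n k; case: (ha k) => i hi hai.
  have := hd k; rewrite hai e_diag.
  case: eqP => // hm _.
  by rewrite hai Los_e hm modn_small.
Qed.
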